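(* Let $m>n$ be positive integers. (a) For every $\lambda\in X$, $x(\lambda)$ lies in the $\mathfrak T_{iso}$-orbit $\mathcal O$ of $\Lambda_0$. (b) For every $k\in\mathbb Z$, $\Lambda_0+kn\,\mathbf m\in\mathcal O$, where $\mathbf m=(m,\dots,m|m,\dots,m)$.
   Context: $X$ is the set of partitions $\lambda=(\lambda_1\ge\dots\ge\lambda_n\ge0)$ with $\lambda_1\le m$; $\lambda'_j=\#\{i:\lambda_i\ge j\}$. For $\lambda\in X$, $x(\lambda)=(a_1,\dots,a_n|b_1,\dots,b_m)\in\mathbb Z^{n|m}$ with $a_i=m(n-i)+n\lambda_{n+1-i}$, $b_j=n(j-1)+m\lambda'_j$; $\Lambda_0=x(\emptyset)=(m(n-1),\dots,m,0|0,n,\dots,n(m-1))$. For $\alpha=\epsilon_i-\delta_j$: $\Pi_\alpha=\{a_i=b_j\}$, $\Pi_{-\alpha}=\{a_i-b_j=n-m\}$, $\tau_\alpha:\Pi_\alpha\to\Pi_{-\alpha}$ adds $n$ to $a_i$ and $m$ to $b_j$, $\tau_{-\alpha}=\tau_\alpha^{-1}$. $\mathcal O$ is the set of elements obtained from $\Lambda_0$ by finite sequences of maps $\tau_{\pm\alpha}$, each applied on its domain. *)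

(* Defs.v *)
From mathcomp Require Import all_boot all_order all_algebra.
Set Implicit Arguments. Unset Strict Implicit. Unset Printing Implicit Defensive.
Import Order.TTheory GRing.Theory Num.Theory.
Local Open Scope ring_scope.

(* Points of Z^{n|m}: (a_1..a_n | b_1..b_m), indices shifted to 0-based ordinals. *)
Definition pt (n m : nat) := ({ffun 'I_n -> int} * {ffun 'I_m -> int})%type.

(* X: partitions lambda_1 >= ... >= lambda_n >= 0 with lambda_1 <= m
   (lam i is lambda_{i+1}). *)
Definition inX (n m : nat) (lam : {ffun 'I_n -> nat}) : Prop :=
  (forall i j : 'I_n, (i <= j)%N -> (lam j <= lam i)%N) /\
  (forall i : 'I_n, (lam i <= m)%N).

Definition conjp (n : nat) (lam : {ffun 'I_n -> nat}) (j : nat) : nat :=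
  #|[set i : 'I_n | (j <= lam i)%N]|.

(* x(lambda): a_i = m(n-i) + n lambda_{n+1-i},  b_j = n(j-1) + m lambda'_j
   with 1-based i, j; here i, j are 0-based, so i+1, j+1 are the paper's indices. *)
Definition xlam (n m : nat) (lam : {ffun 'I_n -> nat}) : pt n m :=
  ([ffun i : 'I_n => ((m * (n - (i.+1)) + n * lam (rev_ord i))%N)%:Z],
   [ffun j : 'I_m => ((n * j + m * conjp lam j.+1)%N)%:Z]).

(* Lambda_0 = x(empty) = (m(n-1),...,m,0 | 0,n,...,n(m-1)) *)
Definition Lambda0 (n m : nat) : pt n m :=
  ([ffun i : 'I_n => ((m * (n - (i.+1)))%N)%:Z],
   [ffun j : 'I_m => ((n * j)%N)%:Z]).

(* tau_alpha for alpha = eps_i - delta_j: defined on a_i = b_j,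
   adds n to a_i and m to b_j. *)
Definition tau_plus (n m : nat) (i : 'I_n) (j : 'I_m) (x : pt n m) : pt n m :=
  ([ffun k => if k == i then x.1 k + n%:Z else x.1 k],
   [ffun l => if l == j then x.2 l + m%:Z else x.2 l]).

(* tau_{-alpha} = tau_alpha^{-1}: defined on a_i - b_j = n - m. *)
Definition tau_minus (n m : nat) (i : 'I_n) (j : 'I_m) (x : pt n m) : pt n m :=
  ([ffun k => if k == i then x.1 k - n%:Z else x.1 k],
   [ffun l => if l == j then x.2 l - m%:Z else x.2 l]).

Definition tau_step (n m : nat) (x y : pt n m) : Prop :=
  exists (i : 'I_n) (j : 'I_m),
    (x.1 i = x.2 j /\ y = tau_plus i j x) \/
    (x.1 i - x.2 j = n%:Z - m%:Z /\ y = tau_minus i j x).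

Inductive inO (n m : nat) : pt n m -> Prop :=
  | inO_base : inO (Lambda0 n m)
  | inO_step : forall x y, inO x -> tau_step x y -> inO y.

Definition shift (n m : nat) (x : pt n m) (c : int) : pt n m :=
  ([ffun k => x.1 k + c], [ffun l => x.2 l + c]).

(* Main.v *)
Require Import Defs.
From mathcomp Require Import all_boot all_order all_algebra.
From mathcomp Require Import zify ring lra.
Import Order.TTheory GRing.Theory Num.Theory.
Set Implicit Arguments. Unset Strict Implicit. Unset Printing Implicit Defensive.
Local Open Scope ring_scope.
Lemma card_lt_ord (n r : nat) : (r <= n)%N -> #|[set k : 'I_n | (k < r)%N]| = r.
Proof.
elim: r => [|r IH] Hr.
  by apply/eqP; rewrite cards_eq0; apply/eqP/setP => k; rewrite !inE.
have Hrn : (r < n)%N by [].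
have -> : [set k : 'I_n | (k < r.+1)%N] = Ordinal Hrn |: [set k : 'I_n | (k < r)%N].
  by apply/setP => k; rewrite !inE ltnS leq_eqVlt -val_eqE.
by rewrite cardsU1 inE ltnn IH ?(ltnW Hr).
Qed.

Section Reach.
Variables n m : nat.
Implicit Types x y z u v : pt n m.
Inductive reach (x : pt n m) : pt n m -> Prop :=
  | reach_refl : reach x x
  | reach_step : forall y z : pt n m, reach x y -> tau_step y z -> reach x z.

Lemma reach_trans x y z : reach x y -> reach y z -> reach x z.
Proof. move=> Hxy; elim=> // u v _ IH Hs; exact: reach_step IH Hs. Qed.

Lemma pt_eq (x y : pt n m) : (forall k, x.1 k = y.1 k) -> (forall l, x.2 l = y.2 l) -> x = y.
Proof.
case: x y => [x1 x2] [y1 y2] /= H1 H2.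
by congr (_, _); apply/ffunP.
Qed.

Lemma step_sym x y : tau_step x y -> tau_step y x.
Proof.
case=> i [j [[Hc ->]|[Hc ->]]]; exists i, j; [right|left]; split.
- by rewrite /tau_plus /= !ffunE !eqxx Hc opprD addrACA subrr add0r.
- apply: pt_eq => [k|l] /=; rewrite !ffunE; case: eqP => _ //; by rewrite addrK.
- rewrite /tau_minus /= !ffunE !eqxx. apply/eqP; rewrite -subr_eq0.
  by move/eqP: Hc; rewrite -subr_eq0 => /eqP <-; apply/eqP; ring.
- apply: pt_eq => [k|l] /=; rewrite !ffunE; case: eqP => _ //; by rewrite subrK.
Qed.

Lemma reach_sym x y : reach x y -> reach y x.
Proof.
elim=> [|u v _ IH Hs]; first exact: reach_refl.
apply: reach_trans IH; apply: reach_step (reach_refl _) _; exact: step_sym.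
Qed.

Lemma step_shift x y c : tau_step x y -> tau_step (shift x c) (shift y c).
Proof.
case=> i [j [[Hc ->]|[Hc ->]]]; exists i, j; [left|right]; split.
- by rewrite /= !ffunE Hc.
- apply: pt_eq => [k|l] /=; rewrite !ffunE; case: eqP => _ //; by rewrite addrAC.
- by rewrite /= !ffunE -Hc; ring.
- apply: pt_eq => [k|l] /=; rewrite !ffunE; case: eqP => _ //; by rewrite addrAC.
Qed.

Lemma reach_shift x y c : reach x y -> reach (shift x c) (shift y c).
Proof.
elim=> [|u v _ IH Hs]; first exact: reach_refl.
exact: reach_step IH (step_shift c Hs).
Qed.

Lemma inO_reach y : inO y <-> reach (Lambda0 n m) y.
Proof.
split.
  elim=> [|u v _ IH Hs]; [exact: reach_refl | exact: reach_step IH Hs].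
elim=> [|u v _ IH Hs]; [exact: inO_base | exact: inO_step IH Hs].
Qed.

Lemma shift_shift x a b : shift (shift x a) b = shift x (a + b).
Proof. by apply: pt_eq => [k|l]; rewrite /= !ffunE addrA. Qed.

Lemma shift0 x : shift x 0 = x.
Proof. by apply: pt_eq => [k|l]; rewrite /= !ffunE addr0. Qed.
End Reach.
Lemma partA (n m : nat) : forall s (lam : {ffun 'I_n -> nat}),
  (\sum_i lam i <= s)%N -> inX m lam -> inO (xlam m lam).
Proof.
elim=> [|s IH] lam Hs [Hmon Hb].
  have Hz : forall i, lam i = 0%N.
    by move=> i; move: Hs; rewrite (bigD1 i) //=; lia.
  have -> : xlam m lam = Lambda0 n m.
    by apply: pt_eq => [k|l]; rewrite /= !ffunE ?Hz ?muln0 ?addn0 //;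
       rewrite /conjp (_ : [set i | _] = set0) ?cards0 ?muln0 ?addn0 //;
       apply/setP => i; rewrite !inE Hz.
  exact: inO_base.
case: (boolP [exists i, (0 < lam i)%N]) => [/existsP [i0 Hi0]|Hne]; last first.
  apply: (IH lam) => //; rewrite big1 // => i _.
  by apply/eqP; rewrite -leqn0 leqNgt; apply/negP => H; case/negP: Hne; apply/existsP; exists i.
case: (@arg_maxnP _ i0 (fun k => (0 < lam k)%N) (fun k : 'I_n => nat_of_ord k) Hi0) => r0 Hr0 Hmax.
set c := lam r0.
have Hz : forall k : 'I_n, (r0 < k)%N -> lam k = 0%N.
  move=> k Hk; apply/eqP; rewrite -leqn0 leqNgt; apply/negP => H.
  by have := Hmax k H; lia.
have Hcm : (c.-1 < m)%N by have := Hb r0; rewrite /c; lia.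
pose mu : {ffun 'I_n -> nat} := [ffun k : 'I_n => if k == r0 then (lam k).-1 else lam k].
have Hmu : inX m mu.
  split=> [i j Hij|i]; rewrite !ffunE.
    case: eqP => [Ej|Hj]; case: eqP => [Ei|Hi].
    - by rewrite Ei Ej.
    - have := Hmon _ _ Hij; lia.
    - rewrite Ei in Hij; have Hj' : (r0 < j)%N.
        rewrite ltn_neqAle Hij andbT; apply/eqP => E; apply: Hj; exact: val_inj.
      by rewrite Hz.
    - exact: Hmon.
  by case: eqP => _; have := Hb i; lia.
have Hsum : (\sum_i mu i <= s)%N.
  have E : (\sum_i lam i = (\sum_i mu i).+1)%N.
    rewrite (bigD1 r0) //= [in RHS](bigD1 r0) //= ffunE eqxx -addSn prednK //.
    congr (_ + _)%N; apply: eq_bigr => k /negPf Hk; by rewrite ffunE Hk.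
  by move: Hs; rewrite E.
have IHmu := IH mu Hsum Hmu.
have Hcmu : conjp mu c = r0.
  rewrite /conjp -[X in _ = X](card_lt_ord (n := n) (ltnW (ltn_ord r0))).
  apply: eq_card => k; rewrite !inE ffunE.
  case: eqP => [->|Hk]; first by rewrite ltnn /c; move: Hr0; lia.
  case: (ltngtP k r0) => H.
  - by have := Hmon k r0 (ltnW H); rewrite /c => ->.
  - by rewrite Hz //; move: Hr0; rewrite /c; lia.
  - by case: Hk; apply: val_inj.
have Hclam : conjp lam c = r0.+1.
  rewrite /conjp -[X in _ = X](card_lt_ord (n := n) (ltn_ord r0)).
  apply: eq_card => k; rewrite !inE ltnS.
  case: (leqP k r0) => H.
  - by have := Hmon k r0 H; rewrite /c => ->.
  - by rewrite Hz //; move: Hr0; rewrite /c; lia.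
set i := rev_ord r0.
set j := Ordinal Hcm.
have -> : xlam m lam = tau_plus i j (xlam m mu).
  apply: pt_eq => [k|l]; rewrite /= !ffunE.
    case: eqP => [->|Hk].
      rewrite /i rev_ordK eqxx -PoszD; congr Posz; move: Hr0; rewrite /c; nia.
    have -> : (rev_ord k == r0) = false.
      by apply/negP => /eqP H; apply: Hk; rewrite /i -H rev_ordK.
    by [].
  case: eqP => [->|Hl].
    rewrite /= -PoszD; congr Posz.
    have -> : (c.-1).+1 = c by move: Hr0; rewrite /c; lia.
    by rewrite Hclam Hcmu; lia.
  congr Posz; congr (_ + _)%N; congr (_ * _)%N; rewrite /conjp.
  apply: eq_card => k; rewrite !inE ffunE.
  case: eqP => [->|_] //.
  have : (l != c.-1 :> nat) by apply/eqP => H; apply: Hl; apply: val_inj.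
  move: Hr0; rewrite /c; lia.
apply: inO_step IHmu _; exists i, j; left; split => //.
rewrite /= !ffunE /i rev_ordK eqxx /j /=.
have -> : (c.-1).+1 = c by move: Hr0; rewrite /c; lia.
rewrite Hcmu /c; congr Posz.
have -> : (n - (n - r0.+1).+1 = r0)%N by have := ltn_ord r0; lia.
by rewrite addnC.
Qed.
Lemma partA' (n m : nat) (lam : {ffun 'I_n -> nat}) : inX m lam -> inO (xlam m lam).
Proof. exact: (@partA n m (\sum_i lam i)). Qed.

Lemma partB (n m : nat) (k : int) : inO (shift (Lambda0 n m) (k * n%:Z * m%:Z)).
Proof.
set c0 := n%:Z * m%:Z.
have H1 : reach (Lambda0 n m) (shift (Lambda0 n m) c0).
  apply/inO_reach.
  have -> : shift (Lambda0 n m) c0 = xlam m [ffun _ : 'I_n => m].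
    apply: pt_eq => [i|j]; rewrite /= !ffunE /c0.
      by rewrite -PoszM -PoszD mulnC.
    rewrite /conjp (_ : [set i | _] = setT); last first.
      by apply/setP => i; rewrite !inE ffunE ltn_ord.
    by rewrite cardsT card_ord -PoszM -PoszD (mulnC m n).
  by apply: partA'; split=> [i j _|i]; rewrite !ffunE.
have Hn : forall q : nat, reach (Lambda0 n m) (shift (Lambda0 n m) (q%:Z * c0)).
  elim=> [|q IH]; first by rewrite mul0r shift0; exact: reach_refl.
  apply: reach_trans IH _.
  have := reach_shift (q%:Z * c0) H1.
  have -> : (q.+1)%:Z * c0 = c0 + q%:Z * c0 by rewrite -addn1 PoszD mulrDl mul1r addrC.
  by rewrite shift_shift.
apply/inO_reach; rewrite -mulrA -/c0.
case: k => k; first exact: Hn.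
apply: reach_sym.
have := reach_shift (Negz k * c0) (Hn k.+1).
rewrite shift_shift.
by rewrite (_ : k.+1%:Z * c0 + Negz k * c0 = 0) ?shift0 // NegzE mulNr addrN.
Qed.

Theorem corollary4p4 (n m : nat) (hn : (0 < n)%N) (hnm : (n < m)%N) :
  (forall lam : {ffun 'I_n -> nat}, inX m lam -> inO (xlam m lam)) /\
  (forall k : int, inO (shift (Lambda0 n m) (k * n%:Z * m%:Z))).
Proof.
split=> [lam H|k]; [exact: partA' | exact: partB].
Qed.
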